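(* Let $\lambda$ be a generic normalized additively alternating $n\times n$ complex matrix with biresidue matrix $b$, and let $I\subseteq\{0,\dots,n-2\}$ be such that $\{i,i+1\}$ is a smoothable edge of $b$ for every $i\in I$. Then the smoothable weights $\boldsymbol\theta_i$, $i\in I$, are linearly independent over $\mathbb{C}$.
   Context: Additively alternating: $\lambda_{ji}=-\lambda_{ij}$; normalized: rows sum to $0$. $\lambda$ is generic if it has rank $n-1$ and every relevant $\operatorname{EExp}(\lambda)$-Hochschild-contributing weight is $\lambda$-Poisson-contributing, where $\operatorname{EExp}(\lambda)=(e^{\lambda_{ij}})$; a weight $\mathbf w\in\mathbb{Z}^n$ is relevant if $w_i\ge-1$, $\sum w_i=0$; $q$-Hochschild-contributing if $w_i\ge-1$ for all $i$ and $\prod_jq_{ij}^{w_j}=1$ whenever $w_i\ge0$; $\lambda$-Poisson-contributing if $w_i\ge-1$ for all $i$ and $\sum_j\lambda_{ij}w_j=0$ whenever $w_i\ge0$. The biresidue matrix is the unique normalized alternating $b$ with $b|_\Delta=(\lambda|_\Delta)^{-1}$, $\Delta=\{z\in\mathbb{C}^n:\sum z_i=0\}$. The edge $\{i,j\}$ is smoothable if $b_{ij}\ne0$ and $(b_{jk}+b_{ki})/b_{ij}\in\mathbb{Z}_{\ge0}$ for $k\ne i,j$; its smoothable weight $\boldsymbol\theta$ has $\theta_i=\theta_j=-1$ and $\theta_k=(b_{jk}+b_{ki})/b_{ij}$ for $k\neq i,j$; $\boldsymbol\theta_i$ denotes the smoothable weight of $\{i,i+1\}$. *)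

(* Defs.v *)
(* complex numbers are R[i] (mathcomp-real-closed) over an
   abstract R : realType (mathcomp-analysis), so that the complex exponential
   can be built from expR, cos and sin. *)
From HB Require Import structures.
From mathcomp Require Import all_boot all_order all_algebra.
From mathcomp Require Import reals sequences exp trigo.
From mathcomp Require Import complex.
Set Implicit Arguments. Unset Strict Implicit. Unset Printing Implicit Defensive.
Import Order.TTheory GRing.Theory Num.Theory.
Local Open Scope ring_scope.

Section Defs.
Variable R : realType.
Local Notation C := R[i].

Definition cexp (z : C) : C :=
  let: Complex a b := z in Complex (expR a * cos b) (expR a * sin b).

Variable n : nat.

Definition add_alternating (l : 'M[C]_n) : Prop :=
  forall i j, l j i = - l i j.

Definition normalized (l : 'M[C]_n) : Prop :=
  forall i, \sum_(j < n) l i j = 0.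

Definition EExp (l : 'M[C]_n) : 'M[C]_n := \matrix_(i, j) cexp (l i j).

Definition relevant (w : 'I_n -> int) : Prop :=
  (forall i, -1 <= w i) /\ \sum_(i < n) w i = 0.

Definition hochschild_contributing (q : 'M[C]_n) (w : 'I_n -> int) : Prop :=
  (forall i, -1 <= w i) /\
  (forall i, 0 <= w i -> \prod_(j < n) (q i j) ^ (w j) = 1).

Definition poisson_contributing (l : 'M[C]_n) (w : 'I_n -> int) : Prop :=
  (forall i, -1 <= w i) /\
  (forall i, 0 <= w i -> \sum_(j < n) l i j * (w j)%:~R = 0).

Definition generic (l : 'M[C]_n) : Prop :=
  \rank l = n.-1 /\
  (forall w, relevant w -> hochschild_contributing (EExp l) w ->
             poisson_contributing l w).

Definition inDelta (z : 'cV[C]_n) : Prop := \sum_(i < n) z i 0 = 0.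

Definition biresidue (l b : 'M[C]_n) : Prop :=
  normalized b /\ add_alternating b /\
  (forall z, inDelta z -> b *m (l *m z) = z /\ l *m (b *m z) = z).

Definition smoothable (b : 'M[C]_n) (i j : 'I_n) : Prop :=
  b i j != 0 /\
  (forall k, k != i -> k != j ->
     exists m : nat, (b j k + b k i) / b i j = m%:R).

Definition smoothable_weight (b : 'M[C]_n) (i j : 'I_n) : 'rV[C]_n :=
  \row_k (if (k == i) || (k == j) then -1 else (b j k + b k i) / b i j).

(* i + 1 as an index (meaningful when i.+1 < n) *)
Definition succ_idx (i : 'I_n) : 'I_n := insubd i i.+1.

End Defs.

(* Main.v *)
Require Import Defs.
From HB Require Import structures.
From mathcomp Require Import all_boot all_order all_algebra.
From mathcomp Require Import reals sequences exp trigo.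
From mathcomp Require Import complex.
Import Order.TTheory GRing.Theory Num.Theory.
Local Open Scope ring_scope.

Lemma succ_val n (i : 'I_n) : (i.+1 < n)%N -> val (succ_idx i) = i.+1.
Proof. by move=> h; rewrite /succ_idx insubdK. Qed.

Lemma core (F : fieldType) n m (c : 'I_m -> F) (e : 'I_m -> 'I_n) :
  injective e -> (forall j, (e j).+1 < n)%N ->
  \sum_j c j *: ('e_(succ_idx (e j)) - 'e_(e j) : 'rV[F]_n) = 0 ->
  forall j, c j = 0.
Proof.
move=> einj hs hw.
pose D (k : nat) := \sum_j c j * (val (e j) == k)%:R.
pose E (k : nat) := \sum_j c j * ((val (e j)).+1 == k)%:R.
have hent : forall k (hk : (k < n)%N), E k - D k = 0.
  move=> k hk; have := congr1 (fun M : 'rV[F]_n => M 0 (Ordinal hk)) hw.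
  rewrite summxE mxE /= => <-; rewrite /E /D -sumrB; apply: eq_bigr => j _.
  rewrite !mxE /= -!val_eqE /= succ_val // -mulrBr.
  by congr (_ * (_%:R - _%:R)); rewrite eq_sym.
have E0 : E 0%N = 0 by rewrite /E big1 // => j _; rewrite mulr0.
have ES : forall k, E k.+1 = D k by move=> k; apply: eq_bigr => j _; rewrite eqSS.
have D0 : forall k, D k = 0.
  elim=> [|k IH].
    case: (ltnP 0 n) => h0.
      by have := hent _ h0; rewrite E0 sub0r => /eqP; rewrite oppr_eq0 => /eqP.
    by rewrite /D big1 // => j _; have := leq_trans (ltn_ord (e j)) h0.
  case: (ltnP k.+1 n) => hk.
    by have := hent _ hk; rewrite ES IH sub0r => /eqP; rewrite oppr_eq0 => /eqP.
  rewrite /D big1 // => j _; rewrite (_ : (_ == _) = false) ?mulr0 //.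
  by apply/negbTE; rewrite neq_ltn (leq_trans (ltn_ord (e j)) hk).
move=> j; have := D0 (val (e j)); rewrite /D (bigD1 j) //= eqxx mulr1 big1 ?addr0 //.
move=> j' hj'; have -> : (val (e j') == val (e j)) = false.
  by apply/negbTE; apply: contra hj' => /eqP/val_inj/einj ->.
by rewrite mulr0.
Qed.

Lemma theta_eq (R : realType) n (b : 'M[R[i]]_n) (i : 'I_n) :
  add_alternating b -> (i.+1 < n)%N -> b i (succ_idx i) != 0 ->
  smoothable_weight b i (succ_idx i) =
  (b i (succ_idx i))^-1 *: ('e_(succ_idx i) - 'e_i) *m b.
Proof.
move=> alt hs hb.
have diag : forall x, b x x = 0.
  move=> x; have := alt x x => /eqP; rewrite -subr_eq0 opprK -mulr2n.
  by rewrite -mulr_natr mulf_eq0 pnatr_eq0 orbF => /eqP.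
have si : succ_idx i != i by rewrite -val_eqE /= succ_val // gtn_eqF.
rewrite -scalemxAl mulmxBl -!rowE; apply/rowP => k; rewrite !mxE.
case: eqP => [->|hki] /=.
  by rewrite diag subr0 [b (succ_idx i) i]alt mulrN mulVf.
case: eqP => [->|hks] /=.
  by rewrite diag sub0r mulrN mulVf.
by rewrite [b k i]alt mulrC.
Qed.

Theorem lemma5p2 (R : realType) (n : nat) (l b : 'M[R[i]]_n) (I : {set 'I_n}) :
  add_alternating l -> normalized l -> generic l ->
  biresidue l b ->
  (forall i, i \in I -> (i.+1 < n)%N) ->
  (forall i, i \in I -> smoothable b i (succ_idx i)) ->
  free [seq smoothable_weight b i (succ_idx i) | i <- enum I].
Proof.
move=> _ _ _ [_ [altb inv]] hI hsm.
apply/freeP => k Hk i.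
pose i0 := enum_val i.
set f := fun j => smoothable_weight b j (succ_idx j).
have szX : forall j : 'I_#|I|, (j < size (enum I))%N by move=> j; rewrite -cardE.
pose e (j : 'I_#|I|) := nth i0 (enum I) j.
have eI : forall j, e j \in I.
  by move=> j; rewrite -mem_enum mem_nth.
have einj : injective e.
  move=> x y /eqP; rewrite /e nth_uniq ?enum_uniq // => /eqP; apply: val_inj.
pose beta j := b (e j) (succ_idx (e j)).
have bnz : forall j, beta j != 0 by move=> j; case: (hsm _ (eI j)).
pose w := \sum_j (k j / beta j) *: ('e_(succ_idx (e j)) - 'e_(e j) : 'rV_n).
have hw : w *m b = 0.
  rewrite -Hk /w mulmx_suml; apply: eq_bigr => j _.
  rewrite (nth_map i0) // -scalemxAl -/(e j) /f theta_eq ?hI ?(bnz j) //.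
  by rewrite -scalemxAl scalerA.
have btr : b^T = - b by apply/matrixP => x y; rewrite !mxE altb.
have hz : b *m w^T = 0.
  by apply/eqP; rewrite -oppr_eq0 -mulNmx -btr -trmx_mul hw trmx0.
have dz : inDelta w^T.
  rewrite /inDelta; under eq_bigr do rewrite mxE /w summxE.
  rewrite exchange_big big1 // => j _.
  under eq_bigr do rewrite !mxE.
  have s1 : forall a : 'I_n, \sum_(x < n) ((x == a)%:R : R[i]) = 1.
    by move=> a; rewrite (bigD1 a) //= eqxx big1 ?addr0 // => x /negbTE ->.
  by rewrite -mulr_sumr sumrB !s1 subrr mulr0.
have w0 : w = 0.
  have [_ H] := inv _ dz; rewrite hz mulmx0 in H.
  by rewrite -[w]trmxK -H trmx0.
have := @core _ _ _ _ _ einj (fun j => hI _ (eI j)) w0 i.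
by move/eqP; rewrite mulf_eq0 invr_eq0 (negbTE (bnz i)) orbF => /eqP.
Qed.
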